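(* The extended metric space of finitely presented $n$-parameter persistence modules equipped with the interleaving distance $d_I$ is a path metric space.
   Context: Persistence modules are functors from $(\mathbb{R}^n,\leq)$ to finite-dimensional vector spaces over a field (equivalently $\mathbb{R}^n$-graded modules over the monoid ring of $([0,\infty)^n,+)$); finitely presented means a quotient of a finitely generated free graded module by a finitely generated homogeneous submodule; modules are considered up to isomorphism. $M,N$ are $\varepsilon$-interleaved if there are natural families $f_{\vec a}:M_{\vec a}\to N_{\vec a+\varepsilon\vec1}$, $g_{\vec a}:N_{\vec a}\to M_{\vec a+\varepsilon\vec1}$ whose composites $g\circ f$, $f\circ g$ are the internal maps $M(\vec a\le\vec a+2\varepsilon\vec1)$, $N(\vec a\le\vec a+2\varepsilon\vec1)$; $d_I(M,N)$ is the infimum of such $\varepsilon\ge0$ (possibly $\infty$). A path metric space is an (extended) metric space in which the distance between any two points at finite distance equals the infimum of the lengths $\ell_d(\gamma)=\sup\sum_i d(\gamma(t_{i-1}),\gamma(t_i))$ (supremum over partitions of $[0,1]$) of continuous paths $\gamma:[0,1]\to X$ joining them. *)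

(* Defs.v *)
From HB Require Import structures.
From mathcomp Require Import all_boot all_order all_algebra.
From mathcomp Require Import all_classical all_reals.
From mathcomp Require Import ereal.

Set Implicit Arguments.
Unset Strict Implicit.
Unset Printing Implicit Defensive.

Import Order.TTheory GRing.Theory Num.Theory.
Local Open Scope ring_scope.
Local Open Scope classical_set_scope.

Section PersMod.
Variables (k : fieldType) (R : realType) (n : nat).

Definition pt := 'I_n -> R.

Definition vle (a b : pt) : bool := [forall i, a i <= b i].

Definition shift (a : pt) (e : R) : pt := fun i => a i + e.

(* M_a is represented as the row space k^(pdim a); the internal map
   M(a <= b) acts on row vectors by right multiplication by pmap a b.
   (pmap a b is irrelevant when a is not <= b.) *)
Record pmod := PMod {
  pdim : pt -> nat;
  pmap : forall a b : pt, 'M[k]_(pdim a, pdim b);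
  pmap_id : forall a, pmap a a = 1%:M;
  pmap_comp : forall a b c, vle a b -> vle b c ->
                pmap a b *m pmap b c = pmap a c
}.

Definition interleaved (M N : pmod) (e : R) : Prop :=
  0 <= e /\
  exists (f : forall a, 'M[k]_(pdim M a, pdim N (shift a e)))
         (g : forall a, 'M[k]_(pdim N a, pdim M (shift a e))),
    [/\ (forall a b, vle a b ->
           f a *m pmap N (shift a e) (shift b e) = pmap M a b *m f b),
        (forall a b, vle a b ->
           g a *m pmap M (shift a e) (shift b e) = pmap N a b *m g b),
        (forall a, f a *m g (shift a e) = pmap M a (shift (shift a e) e)) &
        (forall a, g a *m f (shift a e) = pmap N a (shift (shift a e) e))].

Definition dI (M N : pmod) : \bar R :=
  ereal_inf [set (e%:E)%E | e in [set e | interleaved M N e]].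

(* Finitely presented: there is a natural surjection phi : F -> M from the
   free module F on finitely many generators (grades g i, images x i in
   M_(g i)), whose kernel is generated by finitely many homogeneous elements
   (grades r j, coordinates c j in F_(r j)).  F_a is modelled as the
   subspace of k^p spanned by the e_i with g i <= a, with inclusions as
   internal maps; phi_a is the matrix Phi a. *)
Definition fin_pres (M : pmod) : Prop :=
  exists (p q : nat) (g : 'I_p -> pt) (x : forall i : 'I_p, 'rV[k]_(pdim M (g i)))
         (r : 'I_q -> pt) (c : 'I_q -> 'rV[k]_p),
    let Phi (a : pt) : 'M[k]_(p, pdim M a) :=
      \matrix_(i < p, j < pdim M a)
        (if vle (g i) a then (x i *m pmap M (g i) a) 0 j else 0) in
    let Rel (a : pt) : 'M[k]_(q, p) :=
      \matrix_(j < q, i < p) (if vle (r j) a then c j 0 i else 0) in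
    [/\ (forall j i, c j 0 i != 0 -> vle (g i) (r j)),
        (forall a, row_full (Phi a)) &
        (forall a (v : 'rV[k]_p), (forall i, v 0 i != 0 -> vle (g i) a) ->
           (v *m Phi a = 0 <-> (v <= Rel a)%MS))].

Definition path_in (P : pmod -> Prop) (gam : R -> pmod) : Prop :=
  (forall t, 0 <= t <= 1 -> P (gam t)) /\
  (forall t, 0 <= t <= 1 -> forall eps : R, 0 < eps ->
     exists2 del : R, 0 < del &
       forall s, 0 <= s <= 1 -> `|s - t| < del -> (dI (gam s) (gam t) < eps%:E)%E).

Definition plength (gam : R -> pmod) : \bar R :=
  ereal_sup [set s | exists (m : nat) (t : nat -> R),
    [/\ t 0%N = 0, t m = 1, (forall i, (i < m)%N -> t i <= t i.+1) &
        s = (\sum_(0 <= i < m) dI (gam (t i)) (gam (t i.+1)))%E]].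

End PersMod.

(* Main.v *)
Require Import Defs.
From HB Require Import structures.
From mathcomp Require Import all_boot all_order all_algebra.
From mathcomp Require Import all_classical all_reals.
From mathcomp Require Import ereal.
From mathcomp Require Import ring lra.
Import Order.TTheory GRing.Theory Num.Theory.
Local Open Scope ring_scope.
Local Open Scope classical_set_scope.

Set Implicit Arguments.
Unset Strict Implicit.
Unset Printing Implicit Defensive.

Notation pm := Defs.pmap.

Section Basics.
Variables (k : fieldType) (R : realType) (n : nat).
Local Notation pt := (pt R n).
Local Notation pmod := (pmod k R n).

Lemma vleP (a b : pt) : reflect (forall i, a i <= b i) (vle a b).
Proof. exact: forallP. Qed.

Lemma vle_refl (a : pt) : vle a a.
Proof. by apply/vleP. Qed.

Lemma vle_trans (a b c : pt) : vle a b -> vle b c -> vle a c.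
Proof. by move=> /vleP H1 /vleP H2; apply/vleP => i; apply: le_trans (H1 i) (H2 i). Qed.

Definition supp p (g : 'I_p -> pt) a (v : 'rV[k]_p) :=
  forall i, v 0 i != 0 -> vle (g i) a.
Arguments supp {p} g a v.

Definition Phi (M : pmod) p (g : 'I_p -> pt) (x : forall i, 'rV[k]_(pdim M (g i))) a
  : 'M[k]_(p, pdim M a) :=
  \matrix_(i < p, j < pdim M a) (if vle (g i) a then (x i *m pm M (g i) a) 0 j else 0).
Arguments Phi M {p} g x a.

Definition Rel q p (r : 'I_q -> pt) (c : 'I_q -> 'rV[k]_p) (a : pt) : 'M[k]_(q, p) :=
  \matrix_(j < q, i < p) (if vle (r j) a then c j 0 i else 0).
Arguments Rel {q p} r c a.

Definition pres (M : pmod) p q (g : 'I_p -> pt) (x : forall i, 'rV[k]_(pdim M (g i)))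
  (r : 'I_q -> pt) (c : 'I_q -> 'rV[k]_p) :=
  [/\ (forall j i, c j 0 i != 0 -> vle (g i) (r j)),
      (forall a, row_full (Phi M g x a)) &
      (forall a (v : 'rV_p), supp g a v ->
         (v *m Phi M g x a = 0 <-> (v <= Rel r c a)%MS))].
Arguments pres M {p q} g x r c.

Lemma fin_presP (M : pmod) :
  fin_pres M <-> exists p q g x r c, @pres M p q g x r c.
Proof. by split; case=> p [q [g [x [r [c H]]]]]; exists p, q, g, x, r, c. Qed.

Lemma row_Phi (M : pmod) p g x a i :
  row i (@Phi M p g x a) = if vle (g i) a then x i *m pm M (g i) a else 0.
Proof. by apply/rowP => j; rewrite !mxE; case: ifP => //; rewrite mxE. Qed.

Lemma row_Rel q p r c a j :
  row j (@Rel q p r c a) = if vle (r j) a then c j else 0.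
Proof. by apply/rowP => i; rewrite !mxE; case: ifP => //; rewrite mxE. Qed.

Lemma mul_supp p m (v : 'rV[k]_p) (A B : 'M[k]_(p, m)) :
  (forall i, v 0 i != 0 -> row i A = row i B) -> v *m A = v *m B.
Proof.
move=> H; rewrite !mulmx_sum_row; apply: eq_bigr => i _.
by have [->|/H->] := eqVneq (v 0 i) 0; rewrite ?scale0r.
Qed.

Definition mask p (g : 'I_p -> pt) a (v : 'rV[k]_p) : 'rV[k]_p :=
  \row_l (if vle (g l) a then v 0 l else 0).
Arguments mask {p} g a v.

Lemma mask_supp p g a v : supp g a (@mask p g a v).
Proof. by move=> i; rewrite mxE; case: ifP => // _; rewrite eqxx. Qed.

Lemma mask_mul p m g a (v : 'rV[k]_p) (A : 'M[k]_(p, m)) :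
  (forall l, ~~ vle (g l) a -> row l A = 0) -> mask g a v *m A = v *m A.
Proof.
move=> H; rewrite !mulmx_sum_row; apply: eq_bigr => l _; rewrite mxE.
by case: ifPn => // /H ->; rewrite !scaler0.
Qed.

Lemma row_full_cancel m p l (A : 'M[k]_(m, p)) (X Y : 'M[k]_(p, l)) :
  row_full A -> A *m X = A *m Y -> X = Y.
Proof.
move=> fA E; rewrite -[X]mul1mx -[Y]mul1mx -(mulVpmx fA) -!mulmxA.
by rewrite E.
Qed.

Lemma sub_mul0 m1 m2 p l (A : 'M[k]_(m1, p)) (B : 'M[k]_(m2, p)) (Z : 'M[k]_(p, l)) :
  (A <= B)%MS -> B *m Z = 0 -> A *m Z = 0.
Proof. by case/submxP => D -> E; rewrite -mulmxA E mulmx0. Qed.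

Definition Ymx (Q : pmod) p (s : pt -> pt) (g : 'I_p -> pt)
  (y : forall i, 'rV[k]_(pdim Q (s (g i)))) a : 'M[k]_(p, pdim Q (s a)) :=
  \matrix_(i, j) (if vle (g i) a then (y i *m pm Q (s (g i)) (s a)) 0 j else 0).
Arguments Ymx Q {p} s g y a.

Lemma row_Ymx Q p s g y a i :
  row i (@Ymx Q p s g y a) = if vle (g i) a then y i *m pm Q (s (g i)) (s a) else 0.
Proof. by apply/rowP => j; rewrite !mxE; case: ifP => //; rewrite mxE. Qed.

Definition mor (M Q : pmod) p (g : 'I_p -> pt) (x : forall i, 'rV[k]_(pdim M (g i)))
  (s : pt -> pt) (y : forall i, 'rV[k]_(pdim Q (s (g i)))) a
  : 'M[k]_(pdim M a, pdim Q (s a)) :=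
  locked (pinvmx (Phi M g x a) *m Ymx Q s g y a).
Arguments mor M Q {p} g x s y a.

Definition nat_fam (M Q : pmod) (s : pt -> pt)
  (h : forall a, 'M[k]_(pdim M a, pdim Q (s a))) :=
  forall a b, vle a b -> h a *m pm Q (s a) (s b) = pm M a b *m h b.
Arguments nat_fam M Q s h.

Section Morph.
Variables (M Q : pmod) (p q : nat) (g : 'I_p -> pt)
  (x : forall i, 'rV[k]_(pdim M (g i))) (r : 'I_q -> pt) (c : 'I_q -> 'rV[k]_p).
Hypothesis HP : pres M g x r c.
Variable (s : pt -> pt).
Hypothesis smono : forall a b, vle a b -> vle (s a) (s b).
Variable y : forall i, 'rV[k]_(pdim Q (s (g i))).
Hypothesis Hrel : forall j, c j *m Ymx Q s g y (r j) = 0.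

Lemma Ymx_push a b i : vle (g i) a -> vle a b ->
  row i (Ymx Q s g y a) *m pm Q (s a) (s b) = row i (Ymx Q s g y b).
Proof.
move=> ga ab; rewrite !row_Ymx ga (vle_trans ga ab) -mulmxA.
by rewrite (pmap_comp _ (smono ga) (smono ab)).
Qed.

Lemma Rel_Ymx a : Rel r c a *m Ymx Q s g y a = 0.
Proof.
case: HP => Hc _ _.
apply/row_matrixP => j; rewrite row_mul row0 row_Rel.
case: ifPn => ra; last by rewrite mul0mx.
have -> : c j *m Ymx Q s g y a = c j *m (Ymx Q s g y (r j) *m pm Q (s (r j)) (s a)).
  apply: mul_supp => i /Hc gr; rewrite row_mul.
  by rewrite (Ymx_push gr ra).
by rewrite mulmxA Hrel mul0mx.
Qed.

Lemma Phi_mor a : Phi M g x a *m mor M Q g x s y a = Ymx Q s g y a.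
Proof.
case: HP => Hc Hf Hk.
set P := Phi M g x a.
have W : P *m pinvmx P *m P = P by apply: mulmxKpV.
apply/row_matrixP => i; rewrite row_mul /mor -lock mulmxA -row_mul.
set w := row i (P *m pinvmx P).
pose d : 'rV[k]_p := if vle (g i) a then delta_mx 0 i else 0.
have dY : d *m Ymx Q s g y a = row i (Ymx Q s g y a).
  rewrite /d row_Ymx; case: ifPn => gi; last by rewrite mul0mx.
  by rewrite -rowE row_Ymx gi.
have dP : d *m P = row i P.
  rewrite /d /P row_Phi; case: ifPn => gi; last by rewrite mul0mx.
  by rewrite -rowE row_Phi gi.
have zP : forall l, ~~ vle (g l) a -> row l P = 0.
  by move=> l gl; rewrite /P row_Phi (negbTE gl).
have zY : forall l, ~~ vle (g l) a -> row l (Ymx Q s g y a) = 0.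
  by move=> l gl; rewrite row_Ymx (negbTE gl).
have sup : supp g a (mask g a w - d).
  move=> l; rewrite /d; case: (boolP (vle (g l) a)) => gl //.
  case: ifPn => gi; rewrite !mxE (negbTE gl) ?mxE.
    case: (eqVneq l i) => [E|nli]; first by rewrite E gi in gl.
    by rewrite andbF sub0r oppr0 eqxx.
  by rewrite subr0 eqxx.
have E : (mask g a w - d) *m P = 0.
  by rewrite mulmxBl (mask_mul _ zP) /w -row_mul W dP subrr.
have := (proj1 (Hk a _ sup) E) => /sub_mul0 /(_ (Rel_Ymx a)).
by rewrite mulmxBl (mask_mul _ zY) dY => /eqP; rewrite subr_eq0 => /eqP.
Qed.

Lemma vPhi_mor a (v : 'rV[k]_p) : v *m Phi M g x a *m mor M Q g x s y a = v *m Ymx Q s g y a.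
Proof. by rewrite -mulmxA Phi_mor. Qed.

Lemma gen_mor i : x i *m mor M Q g x s y (g i) = y i.
Proof.
have : row i (Phi M g x (g i)) = x i by rewrite row_Phi vle_refl pmap_id mulmx1.
move=> <-; rewrite -row_mul Phi_mor row_Ymx vle_refl.
by rewrite pmap_id mulmx1.
Qed.

Lemma nat_mor : nat_fam (mor M Q g x s y).
Proof.
case: HP => Hc Hf Hk.
move=> a b ab; apply: (row_full_cancel (Hf a)).
rewrite mulmxA Phi_mor; apply/row_matrixP => i.
rewrite !row_mul row_Phi row_Ymx; case: ifPn => gi; last by rewrite !mul0mx.
rewrite -mulmxA (pmap_comp _ (smono gi) (smono ab)).
have -> : x i *m pm M (g i) a *m (pm M a b *m mor M Q g x s y b) =
   x i *m pm M (g i) b *m mor M Q g x s y b.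
  by rewrite mulmxA -(mulmxA (x i)) (pmap_comp _ gi ab).
have : row i (Phi M g x b) = x i *m pm M (g i) b by rewrite row_Phi (vle_trans gi ab).
move=> <-; by rewrite -row_mul Phi_mor row_Ymx (vle_trans gi ab).
Qed.

End Morph.

Lemma mor_uniq (M Q : pmod) p q g x r c (s : pt -> pt)
  (h h' : forall a, 'M[k]_(pdim M a, pdim Q (s a))) :
  @pres M p q g x r c -> nat_fam h -> nat_fam h' ->
  (forall i, x i *m h (g i) = x i *m h' (g i)) -> forall a, h a = h' a.
Proof.
case=> _ Hf _ nh nh' Hx a; apply: (row_full_cancel (Hf a)).
apply/row_matrixP => i; rewrite !row_mul row_Phi.
case: ifPn => gi; last by rewrite !mul0mx.
by rewrite -!mulmxA -nh // -nh' // !mulmxA Hx.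
Qed.

Lemma interleave_pres (M N : pmod) pM qM gM xM rM cM pN qN gN xN rN cN (e : R)
  (yM : forall i, 'rV[k]_(pdim N (shift (gM i) e)))
  (yN : forall j, 'rV[k]_(pdim M (shift (gN j) e))) :
  0 <= e -> @pres M pM qM gM xM rM cM -> @pres N pN qN gN xN rN cN ->
  (forall j, cM j *m Ymx N (fun a => shift a e) gM yM (rM j) = 0) ->
  (forall j, cN j *m Ymx M (fun a => shift a e) gN yN (rN j) = 0) ->
  (forall i, yM i *m mor N M gN xN (fun a => shift a e) yN (shift (gM i) e)
             = xM i *m pm M (gM i) (shift (shift (gM i) e) e)) ->
  (forall j, yN j *m mor M N gM xM (fun a => shift a e) yM (shift (gN j) e)
             = xN j *m pm N (gN j) (shift (shift (gN j) e) e)) ->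
  interleaved M N e.
Proof.
move=> e0 HM HN RM RN CM CN.
have smono : forall a b : pt, vle a b -> vle (shift a e) (shift b e).
  by move=> a b ab; apply/vleP => i; rewrite /shift lerD2r; exact: (elimT (vleP a b) ab i).
have ss : forall a : pt, vle a (shift (shift a e) e).
  by move=> a; apply/vleP => i; rewrite /shift -addrA lerDl addr_ge0.
split => //.
exists (mor M N gM xM (fun a => shift a e) yM), (mor N M gN xN (fun a => shift a e) yN); split.
- exact: (nat_mor HM smono RM).
- exact: (nat_mor HN smono RN).
- move=> a.
  have := @mor_uniq M M _ _ _ _ _ _ (fun a => shift (shift a e) e)
    (fun a => mor M N gM xM (fun a => shift a e) yM a *m mor N M gN xN (fun a => shift a e) yN (shift a e))
    (fun a => pm M a (shift (shift a e) e)) HM.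
  apply.
  + move=> b c bc /=; rewrite -mulmxA (nat_mor HN smono RN) ?smono //.
    by rewrite !mulmxA (nat_mor HM smono RM).
  + move=> b c bc /=; rewrite (pmap_comp _ (ss b) (smono _ _ (smono _ _ bc))).
    by rewrite (pmap_comp _ bc (ss c)).
  + by move=> i /=; rewrite mulmxA (gen_mor HM smono RM) CM.
- move=> a.
  have := @mor_uniq N N _ _ _ _ _ _ (fun a => shift (shift a e) e)
    (fun a => mor N M gN xN (fun a => shift a e) yN a *m mor M N gM xM (fun a => shift a e) yM (shift a e))
    (fun a => pm N a (shift (shift a e) e)) HN.
  apply.
  + move=> b c bc /=; rewrite -mulmxA (nat_mor HM smono RM) ?smono //.
    by rewrite !mulmxA (nat_mor HN smono RN).
  + move=> b c bc /=; rewrite (pmap_comp _ (ss b) (smono _ _ (smono _ _ bc))).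
    by rewrite (pmap_comp _ bc (ss c)).
  + by move=> i /=; rewrite mulmxA (gen_mor HN smono RN) CN.
Qed.

End Basics.

Arguments supp {k R n p} g a v.
Arguments Phi {k R n} M {p} g x a.
Arguments Rel {k R n q p} r c a.
Arguments pres {k R n} M {p q} g x r c.
Arguments mask {k R n p} g a v.
Arguments Ymx {k R n} Q {p} s g y a.
Arguments mor {k R n} M Q {p} g x s y a.
Arguments nat_fam {k R n} M Q s h.



Section PresMod.
Variables (k : fieldType) (R : realType) (n : nat).
Local Notation pt := (pt R n).
Local Notation pmod := (pmod k R n).

Definition pinv m p (A : 'M[k]_(m, p)) : 'M[k]_(p, m) := locked (pinvmx A).

Lemma pinvK m1 m p (A : 'M[k]_(m, p)) (B : 'M[k]_(m1, p)) :
  (B <= A)%MS -> B *m pinv A *m A = B.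
Proof. by rewrite /pinv -lock; apply: mulmxKpV. Qed.

Lemma pinvV m p (A : 'M[k]_(m, p)) : row_free A -> A *m pinv A = 1%:M.
Proof. by rewrite /pinv -lock; apply: mulmxVp. Qed.

Variables (p q : nat) (G : 'I_p -> pt) (Rg : 'I_q -> pt) (C : 'I_q -> 'rV[k]_p).

Definition Dm a : 'M[k]_p := diag_mx (\row_i (if vle (G i) a then 1 else 0)).
Definition Lm a : 'M[k]_p := locked (cokermx (Rel Rg C a)).
Definition Em a := locked (row_base (Dm a *m Lm a)).
Definition pdP a := \rank (Dm a *m Lm a).
Definition pmP a b : 'M[k]_(pdP a, pdP b) :=
  Em a *m pinv (Lm a) *m Lm b *m pinv (Em b).

Lemma row_Dm a i : row i (Dm a) = if vle (G i) a then delta_mx 0 i else 0.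
Proof. by rewrite row_diag_mx mxE; case: ifP; rewrite ?scale1r ?scale0r. Qed.

Lemma Dm_mono a b : vle a b -> Dm a *m Dm b = Dm a.
Proof.
move=> ab; apply/row_matrixP => i; rewrite row_mul row_Dm.
case: ifPn => gi; last by rewrite mul0mx.
by rewrite -rowE row_Dm (vle_trans gi ab).
Qed.

Lemma supp_Dm a (v : 'rV[k]_p) : supp G a v -> v *m Dm a = v.
Proof.
move=> sv; rewrite -[RHS]mulmx1; apply: mul_supp => i /sv gi.
by rewrite row_Dm gi row1.
Qed.

Lemma Rel_mono a b : vle a b -> (Rel Rg C a <= Rel Rg C b)%MS.
Proof.
move=> ab; apply/row_subP => j; rewrite row_Rel.
case: ifPn => rj; last exact: sub0mx.
have <- : row j (Rel Rg C b) = C j by rewrite row_Rel (vle_trans rj ab).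
exact: row_sub.
Qed.

Lemma Lm0 a m (v : 'M[k]_(m, p)) : (v <= Rel Rg C a)%MS = (v *m Lm a == 0).
Proof. by rewrite /Lm -lock submxE. Qed.

Lemma L_trans a b : vle a b -> Lm a *m pinv (Lm a) *m Lm b = Lm b.
Proof.
move=> ab; set W := Lm a *m pinv (Lm a).
have W1 : W *m Lm a = Lm a by rewrite /W pinvK.
have : ((W - 1%:M) <= Rel Rg C a)%MS.
  by rewrite Lm0 mulmxBl W1 mul1mx subrr.
move/submx_trans/(_ (Rel_mono ab)).
by rewrite Lm0 mulmxBl mul1mx subr_eq0 => /eqP.
Qed.

Lemma Em_sub a : (Em a <= Dm a *m Lm a)%MS.
Proof. by rewrite /Em -lock eq_row_base. Qed.

Lemma sub_Em a : (Dm a *m Lm a <= Em a)%MS.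
Proof. by rewrite /Em -lock eq_row_base. Qed.

Lemma Em_free a : row_free (Em a).
Proof. by rewrite /Em -lock row_base_free. Qed.

Lemma Em_push a b : vle a b -> (Em a *m pinv (Lm a) *m Lm b <= Em b)%MS.
Proof.
move=> ab; case/submxP: (Em_sub a) => D ->.
rewrite -(mulmxA D) -(mulmxA D).
have -> : Dm a *m Lm a *m pinv (Lm a) *m Lm b = Dm a *m Dm b *m Lm b.
  by rewrite -!mulmxA (mulmxA (Lm a)) (L_trans ab) mulmxA (Dm_mono ab).
rewrite -(mulmxA (Dm a)) (mulmxA D).
exact: submx_trans (submxMl _ _) (sub_Em b).
Qed.

Lemma pmP_id a : pmP a a = 1%:M.
Proof.
rewrite /pmP pinvK; first exact: pinvV (Em_free a).
apply: submx_trans (Em_sub a) _; exact: submxMl.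
Qed.

Lemma pmP_comp a b c : vle a b -> vle b c -> pmP a b *m pmP b c = pmP a c.
Proof.
move=> ab bc; rewrite /pmP.
have E1 := pinvK (Em_push ab).
rewrite !mulmxA E1.
apply: (congr1 (fun X => X *m pinv (Em c))).
by rewrite -!mulmxA (mulmxA (Lm b)) (L_trans bc).
Qed.

Definition PresMod : pmod := PMod pmP_id pmP_comp.

Definition XP i : 'rV[k]_(pdim PresMod (G i)) :=
  (delta_mx 0 i : 'rV[k]_p) *m Lm (G i) *m pinv (Em (G i)).

Lemma delta_Lm i a : vle (G i) a -> ((delta_mx 0 i : 'rV[k]_p) *m Lm a <= Em a)%MS.
Proof.
move=> gi; apply: submx_trans (sub_Em a).
have -> : (delta_mx 0 i : 'rV[k]_p) = row i (Dm a) by rewrite row_Dm gi.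
by rewrite rowE -mulmxA submxMl.
Qed.

Lemma Phi_Pres (a : pt) : Phi PresMod G XP a = Dm a *m Lm a *m pinv (Em a).
Proof.
apply/row_matrixP => i; rewrite row_Phi !row_mul row_Dm.
case: ifPn => gi; last by rewrite !mul0mx.
rewrite /XP /= /pmP !mulmxA (pinvK (delta_Lm (vle_refl (G i)))).
rewrite -!mulmxA (mulmxA (Lm (G i))) (mulmxA (Lm (G i) *m pinv (Lm (G i)))).
by rewrite (L_trans gi) !mulmxA.
Qed.

Hypothesis HC : forall j i, C j 0 i != 0 -> vle (G i) (Rg j).

Lemma pres_Pres : pres PresMod G XP Rg C.
Proof.
split => //.
- move=> a; rewrite Phi_Pres; apply/row_fullP.
  case/submxP: (Em_sub a) => D DE; exists D.
  by rewrite !mulmxA -(mulmxA D) -DE pinvV ?Em_free.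
- move=> a v sv; rewrite Phi_Pres Lm0 !mulmxA (supp_Dm sv); split.
  + move=> E; apply/eqP.
    have sub : (v *m Lm a <= Em a)%MS.
      by rewrite -(supp_Dm sv) -mulmxA; apply: submx_trans (submxMl _ _) (sub_Em a).
    by rewrite -(pinvK sub) E mul0mx.
  + by move/eqP ->; rewrite mul0mx.
Qed.

Lemma fin_pres_Pres : fin_pres PresMod.
Proof. apply/fin_presP; exists p, q, G, XP, Rg, C; exact: pres_Pres. Qed.

End PresMod.



Section Helpers.
Variables (k : fieldType) (R : realType) (n : nat).
Local Notation pt := (pt R n).
Local Notation pmod := (pmod k R n).

Lemma rel_holds (M : pmod) p q (g : 'I_p -> pt) x (r : 'I_q -> pt) c j (a : pt) :
  pres M g x r c -> vle (r j) a -> c j *m Phi M g x a = 0.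
Proof.
case=> Hc _ Hk ra; apply/(Hk a (c j)).
- by move=> i /Hc gi; exact: vle_trans gi ra.
- have <- : row j (Rel r c a) = c j by rewrite row_Rel ra.
  exact: row_sub.
Qed.

Lemma gen_push (M : pmod) p (g : 'I_p -> pt) x i (a : pt) :
  vle (g i) a -> x i *m pm M (g i) a = delta_mx 0 i *m Phi M g x a.
Proof. by move=> gi; rewrite -rowE row_Phi gi. Qed.

Lemma Phi_push (M : pmod) p (g : 'I_p -> pt) x (a b : pt) (v : 'rV[k]_p) :
  supp g a v -> vle a b -> v *m Phi M g x a *m pm M a b = v *m Phi M g x b.
Proof.
move=> sv ab; rewrite -mulmxA; apply: mul_supp => i /sv gi.
by rewrite row_mul !row_Phi gi (vle_trans gi ab) -mulmxA (pmap_comp _ gi ab).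
Qed.

Lemma supp_delta p (g : 'I_p -> pt) i (a : pt) :
  vle (g i) a -> supp g a (delta_mx 0 i : 'rV[k]_p).
Proof.
move=> gi l; rewrite mxE; case: (eqVneq l i) => [->|]; first by [].
by rewrite andbF eqxx.
Qed.

Definition coef (M : pmod) p (g : 'I_p -> pt) x (a : pt) (u : 'rV[k]_(pdim M a)) :=
  mask g a (u *m pinv (Phi M g x a)).

Lemma coef_supp (M : pmod) p (g : 'I_p -> pt) x a u : supp g a (@coef M p g x a u).
Proof. exact: mask_supp. Qed.

Lemma coef_Phi (M : pmod) p q (g : 'I_p -> pt) x (r : 'I_q -> pt) c a u :
  pres M g x r c -> @coef M p g x a u *m Phi M g x a = u.
Proof.
case=> _ Hf _; rewrite /coef mask_mul; first by rewrite pinvK // submx_full.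
by move=> l gl; rewrite row_Phi (negbTE gl).
Qed.

Lemma vle_shift (a b : pt) (x y : R) :
  (forall i, a i + x <= b i + y) -> vle (shift a x) (shift b y).
Proof. by move=> H; apply/vleP => i; rewrite /shift. Qed.

Lemma close_interleaved (M N : pmod) p q (gM : 'I_p -> pt) xM (rM : 'I_q -> pt)
  (gN : 'I_p -> pt) xN (rN : 'I_q -> pt) c (e : R) :
  0 <= e -> pres M gM xM rM c -> pres N gN xN rN c ->
  (forall i, vle (gN i) (shift (gM i) e)) -> (forall i, vle (gM i) (shift (gN i) e)) ->
  (forall j, vle (rN j) (shift (rM j) e)) -> (forall j, vle (rM j) (shift (rN j) e)) ->
  interleaved M N e.
Proof.
move=> e0 HM HN g1 g2 r1 r2.
have smono : forall a b : pt, vle a b -> vle (shift a e) (shift b e).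
  by move=> a b ab; apply/vleP => i; rewrite /shift lerD2r; exact: (elimT (vleP a b) ab i).
have ss : forall a : pt, vle a (shift (shift a e) e).
  by move=> a; apply/vleP => i; rewrite /shift -addrA lerDl addr_ge0.
pose yM i := xN i *m pm N (gN i) (shift (gM i) e).
pose yN i := xM i *m pm M (gM i) (shift (gN i) e).
case: (HM) => HcM _ _; case: (HN) => HcN _ _.
have RM : forall j, c j *m Ymx N (fun a => shift a e) gM yM (rM j) = 0.
  move=> j; rewrite -(rel_holds HN (r1 j)).
  apply: mul_supp => i /HcM gi; rewrite row_Ymx row_Phi gi /yM.
  rewrite (vle_trans (g1 i) (smono _ _ gi)) -mulmxA (pmap_comp _ (g1 i)) //.
  exact: smono.
have RN : forall j, c j *m Ymx M (fun a => shift a e) gN yN (rN j) = 0.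
  move=> j; rewrite -(rel_holds HM (r2 j)).
  apply: mul_supp => i /HcN gi; rewrite row_Ymx row_Phi gi /yN.
  rewrite (vle_trans (g2 i) (smono _ _ gi)) -mulmxA (pmap_comp _ (g2 i)) //.
  exact: smono.
apply: (interleave_pres (yM := yM) (yN := yN) e0 HM HN RM RN).
- move=> i; rewrite /yM (gen_push _ (g1 i)) (vPhi_mor HN smono RN).
  rewrite -rowE row_Ymx (g1 i) /yN -mulmxA (pmap_comp _ (g2 i)) //.
  exact: smono.
- move=> i; rewrite /yN (gen_push _ (g2 i)) (vPhi_mor HM smono RM).
  rewrite -rowE row_Ymx (g2 i) /yM -mulmxA (pmap_comp _ (g1 i)) //.
  exact: smono.
Qed.

Lemma interleaved_sym (M N : pmod) e : interleaved M N e -> interleaved N M e.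
Proof. by case=> e0 [f [g [H1 H2 H3 H4]]]; split => //; exists g, f; split. Qed.

Lemma dI_le (M N : pmod) e : interleaved M N e -> (dI M N <= e%:E)%E.
Proof. by move=> H; apply: ereal_inf_lbound; exists e. Qed.

Lemma dI_ge0 (M N : pmod) : (0 <= dI M N)%E.
Proof. by apply/ereal_infP => _ [e [e0 _] <-]; rewrite lee_fin. Qed.

End Helpers.

Arguments coef {k R n} M {p} g x a u.



Lemma ordP m1 m2 (l : 'I_(m1 + m2)) :
  (exists i, l = lshift m2 i) \/ (exists j, l = rshift m1 j).
Proof. by rewrite -(fintype.splitK l); case: (fintype.split l) => x; [left|right]; exists x. Qed.

Lemma split_lshift m1 m2 (i : 'I_m1) : fintype.split (lshift m2 i) = inl i.
Proof. exact: (fintype.unsplitK (inl i)). Qed.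

Lemma split_rshift m1 m2 (j : 'I_m2) : fintype.split (rshift m1 j) = inr j.
Proof. exact: (fintype.unsplitK (inr j)). Qed.

Section Interp0.
Variables (k : fieldType) (R : realType) (n : nat).
Local Notation pt := (pt R n).
Local Notation pmod := (pmod k R n).

Lemma row_mx_mul p1 p2 m (u : 'rV[k]_p1) (v : 'rV[k]_p2) (A : 'M[k]_(p1 + p2, m)) :
  row_mx u v *m A = u *m usubmx A + v *m dsubmx A.
Proof. by rewrite -{1}(vsubmxK A) mul_row_col. Qed.

Lemma row_usub p1 p2 m (A : 'M[k]_(p1 + p2, m)) i :
  row i (usubmx A) = row (lshift p2 i) A.
Proof. by apply/rowP => j; rewrite !mxE. Qed.

Lemma row_dsub p1 p2 m (A : 'M[k]_(p1 + p2, m)) j :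
  row j (dsubmx A) = row (rshift p1 j) A.
Proof. by apply/rowP => i; rewrite !mxE. Qed.

Lemma vle_sh (a b : pt) (x y : R) : vle a b -> x <= y -> vle (shift a x) (shift b y).
Proof.
move=> ab xy; apply/vleP => i; rewrite /shift.
exact: lerD (elimT (vleP a b) ab i) xy.
Qed.

Lemma vle_sh2 (a b : pt) (x y z : R) : vle a (shift b x) -> y + x <= z ->
  vle (shift a y) (shift b z).
Proof.
move=> ab xy; apply/vleP => i; rewrite /shift.
have := elimT (vleP _ _) ab i; rewrite /shift => h.
by apply: le_trans (lerD h (lexx y)) _; rewrite -addrA lerD2l addrC.
Qed.

Lemma vle_shsh (a b : pt) (x y z : R) : vle a b -> x + y <= z ->
  vle (shift (shift a x) y) (shift b z).
Proof.
move=> ab xy; apply/vleP => i; rewrite /shift -addrA.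
exact: lerD (elimT (vleP a b) ab i) xy.
Qed.

Lemma vle_shsh' (a b : pt) (x y z : R) : vle a b -> z <= x + y ->
  vle (shift a z) (shift (shift b x) y).
Proof.
move=> ab xy; apply/vleP => i; rewrite /shift -addrA.
exact: lerD (elimT (vleP a b) ab i) xy.
Qed.

End Interp0.

Section Interp.
Variables (k : fieldType) (R : realType) (n : nat).
Local Notation pt := (pt R n).
Local Notation pmod := (pmod k R n).

Variables (M N : pmod) (pM qM : nat) (gM : 'I_pM -> pt)
  (xM : forall i, 'rV[k]_(pdim M (gM i))) (rM : 'I_qM -> pt) (cM : 'I_qM -> 'rV[k]_pM)
  (pN qN : nat) (gN : 'I_pN -> pt)
  (xN : forall i, 'rV[k]_(pdim N (gN i))) (rN : 'I_qN -> pt) (cN : 'I_qN -> 'rV[k]_pN)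
  (e : R)
  (f : forall a, 'M[k]_(pdim M a, pdim N (shift a e)))
  (g : forall a, 'M[k]_(pdim N a, pdim M (shift a e))).

Definition aa i : 'rV[k]_pN := coef N gN xN (shift (gM i) e) (xM i *m f (gM i)).
Definition bb j : 'rV[k]_pM := coef M gM xM (shift (gN j) e) (xN j *m g (gN j)).

Definition Gt (t : R) (l : 'I_(pM + pN)) : pt :=
  match fintype.split l with inl i => shift (gM i) (t * e) | inr j => shift (gN j) ((1 - t) * e) end.

Definition Rt (t : R) (m : 'I_(qM + qN + (pM + pN))) : pt :=
  match fintype.split m with
  | inl m' => match fintype.split m' with
              | inl j => shift (rM j) (t * e) | inr j => shift (rN j) ((1 - t) * e) end
  | inr l => match fintype.split l with
             | inl i => shift (gM i) ((2 - t) * e) | inr j => shift (gN j) ((1 + t) * e) end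
  end.

Definition Ct (m : 'I_(qM + qN + (pM + pN))) : 'rV[k]_(pM + pN) :=
  match fintype.split m with
  | inl m' => match fintype.split m' with
              | inl j => row_mx (cM j) 0 | inr j => row_mx 0 (cN j) end
  | inr l => match fintype.split l with
             | inl i => row_mx (delta_mx 0 i) (- aa i) | inr j => row_mx (- bb j) (delta_mx 0 j) end
  end.

Definition Pt t := PresMod (Gt t) (Rt t) Ct.
Definition XPt t := XP (Gt t) (Rt t) Ct.

Lemma Gt_l t i : Gt t (lshift pN i) = shift (gM i) (t * e).
Proof. by rewrite /Gt split_lshift. Qed.
Lemma Gt_r t j : Gt t (rshift pM j) = shift (gN j) ((1 - t) * e).
Proof. by rewrite /Gt split_rshift. Qed.

Lemma Rt_1 t j : Rt t (lshift _ (lshift qN j)) = shift (rM j) (t * e).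
Proof. by rewrite /Rt !split_lshift. Qed.
Lemma Rt_2 t j : Rt t (lshift _ (rshift qM j)) = shift (rN j) ((1 - t) * e).
Proof. by rewrite /Rt split_lshift split_rshift. Qed.
Lemma Rt_3 t i : Rt t (rshift _ (lshift pN i)) = shift (gM i) ((2 - t) * e).
Proof. by rewrite /Rt split_rshift split_lshift. Qed.
Lemma Rt_4 t j : Rt t (rshift _ (rshift pM j)) = shift (gN j) ((1 + t) * e).
Proof. by rewrite /Rt !split_rshift. Qed.

Lemma Ct_1 j : Ct (lshift _ (lshift qN j)) = row_mx (cM j) 0.
Proof. by rewrite /Ct !split_lshift. Qed.
Lemma Ct_2 j : Ct (lshift _ (rshift qM j)) = row_mx 0 (cN j).
Proof. by rewrite /Ct split_lshift split_rshift. Qed.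
Lemma Ct_3 i : Ct (rshift _ (lshift pN i)) = row_mx (delta_mx 0 i) (- aa i).
Proof. by rewrite /Ct split_rshift split_lshift. Qed.
Lemma Ct_4 j : Ct (rshift _ (rshift pM j)) = row_mx (- bb j) (delta_mx 0 j).
Proof. by rewrite /Ct !split_rshift. Qed.

Hypotheses (HM : pres M gM xM rM cM) (HN : pres N gN xN rN cN) (e0 : 0 <= e).

Lemma aa_supp i : supp gN (shift (gM i) e) (aa i).
Proof. exact: coef_supp. Qed.
Lemma aa_Phi i : aa i *m Phi N gN xN (shift (gM i) e) = xM i *m f (gM i).
Proof. exact: coef_Phi HN. Qed.
Lemma bb_supp j : supp gM (shift (gN j) e) (bb j).
Proof. exact: coef_supp. Qed.
Lemma bb_Phi j : bb j *m Phi M gM xM (shift (gN j) e) = xN j *m g (gN j).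
Proof. exact: coef_Phi HM. Qed.

Lemma delta_ne0 p (i l : 'I_p) : (delta_mx 0 i : 'rV[k]_p) 0 l != 0 -> l = i.
Proof. by rewrite mxE; case: (eqVneq l i) => //; rewrite andbF eqxx. Qed.

Lemma HCt t : 0 <= t <= 1 ->
  forall m l, Ct m 0 l != 0 -> vle (Gt t l) (Rt t m).
Proof.
case/andP => t0 t1 m l; case: (HM) => HcM _ _; case: (HN) => HcN _ _.
case: (ordP m) => [[m' ->]|[m' ->]]; case: (ordP m') => [[j ->]|[j ->]].
- rewrite Ct_1 Rt_1; case: (ordP l) => [[i ->]|[i ->]].
  + rewrite row_mxEl Gt_l => /HcM ri; exact: vle_sh.
  + by rewrite row_mxEr mxE eqxx.
- rewrite Ct_2 Rt_2; case: (ordP l) => [[i ->]|[i ->]].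
  + by rewrite row_mxEl mxE eqxx.
  + rewrite row_mxEr Gt_r => /HcN ri; exact: vle_sh.
- rewrite Ct_3 Rt_3; case: (ordP l) => [[i ->]|[i ->]].
  + rewrite row_mxEl Gt_l => /delta_ne0 ->; apply: vle_sh (vle_refl _) _.
    by rewrite ler_wpM2r //; lra.
  + rewrite row_mxEr Gt_r mxE oppr_eq0 => /aa_supp gi.
    by apply: vle_sh2 gi _; rewrite -{2}(mul1r e) -mulrDl ler_wpM2r //; lra.
- rewrite Ct_4 Rt_4; case: (ordP l) => [[i ->]|[i ->]].
  + rewrite row_mxEl Gt_l mxE oppr_eq0 => /bb_supp gi.
    by apply: vle_sh2 gi _; rewrite -{2}(mul1r e) -mulrDl ler_wpM2r //; lra.
  + rewrite row_mxEr Gt_r => /delta_ne0 ->; apply: vle_sh (vle_refl _) _.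
    by rewrite ler_wpM2r //; lra.
Qed.

Lemma pres_t t : 0 <= t <= 1 -> pres (Pt t) (Gt t) (XPt t) (Rt t) Ct.
Proof. by move=> ht; apply: pres_Pres; exact: HCt. Qed.

Lemma fin_pres_t t : 0 <= t <= 1 -> fin_pres (Pt t).
Proof. by move=> ht; apply/fin_presP; do 6 eexists; exact: pres_t. Qed.

Lemma aff (s t u v : R) : `|u - v| = `|s - t| -> u * e <= v * e + `|s - t| * e.
Proof.
move=> E; rewrite -E -lerBlDl -mulrBl ler_wpM2r //.
exact: ler_norm.
Qed.

Lemma close_t s t : 0 <= s <= 1 -> 0 <= t <= 1 ->
  interleaved (Pt s) (Pt t) (`|s - t| * e).
Proof.
move=> hs ht.
have de : 0 <= `|s - t| * e by rewrite mulr_ge0.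
have A1 : forall u v, `|u - v| = `|s - t| -> forall a : pt, vle (shift a (u * e)) (shift (shift a (v * e)) (`|s - t| * e)).
  by move=> u v E a; apply: vle_shsh' (vle_refl a) (aff E).
have B : `|s - t| = `|t - s| by rewrite distrC.
have T : forall u v : R, u - v = s - t \/ u - v = t - s -> `|u - v| = `|s - t|.
  by move=> u v [->|->]; rewrite // distrC.
apply: (close_interleaved de (pres_t hs) (pres_t ht)).
- move=> l; case: (ordP l) => [[i ->]|[i ->]]; rewrite !(Gt_l, Gt_r); apply: A1;
  apply: T; (left + right); ring.
- move=> l; case: (ordP l) => [[i ->]|[i ->]]; rewrite !(Gt_l, Gt_r); apply: A1;
  apply: T; (left + right); ring.
- move=> m; case: (ordP m) => [[m' ->]|[m' ->]]; case: (ordP m') => [[j ->]|[j ->]];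
  rewrite ?(Rt_1, Rt_2, Rt_3, Rt_4); apply: A1; apply: T; (left + right); ring.
- move=> m; case: (ordP m) => [[m' ->]|[m' ->]]; case: (ordP m') => [[j ->]|[j ->]];
  rewrite ?(Rt_1, Rt_2, Rt_3, Rt_4); apply: A1; apply: T; (left + right); ring.
Qed.


Hypotheses
  (nf : forall a b, vle a b -> f a *m pm N (shift a e) (shift b e) = pm M a b *m f b)
  (ng : forall a b, vle a b -> g a *m pm M (shift a e) (shift b e) = pm N a b *m g b)
  (gf : forall a, f a *m g (shift a e) = pm M a (shift (shift a e) e))
  (fg : forall a, g a *m f (shift a e) = pm N a (shift (shift a e) e)).

Ltac vsolve0 := apply/vleP => i0;
  rewrite ?Gt_l ?Gt_r ?Rt_1 ?Rt_2 ?Rt_3 ?Rt_4 /shift; lra.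
Ltac vsolve H := apply/vleP => i0;
  rewrite ?Gt_l ?Gt_r ?Rt_1 ?Rt_2 ?Rt_3 ?Rt_4 /shift;
  have := elimT (vleP _ _) H i0;
  rewrite ?Gt_l ?Gt_r ?Rt_1 ?Rt_2 ?Rt_3 ?Rt_4 /shift => ?; lra.

Lemma gN_push a (T : pt) j : vle (shift a e) T -> vle (gN j) a ->
  xN j *m g (gN j) *m pm M (shift (gN j) e) T =
  row j (Phi N gN xN a) *m g a *m pm M (shift a e) T.
Proof.
move=> aT ja; rewrite row_Phi ja.
have -> : xN j *m pm N (gN j) a *m g a = xN j *m g (gN j) *m pm M (shift (gN j) e) (shift a e).
  by rewrite -mulmxA -ng // mulmxA.
by rewrite -[RHS]mulmxA (pmap_comp _ (vle_sh ja (lexx e)) aT).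
Qed.

Lemma gM_push a (T : pt) i : vle (shift a e) T -> vle (gM i) a ->
  xM i *m f (gM i) *m pm N (shift (gM i) e) T =
  row i (Phi M gM xM a) *m f a *m pm N (shift a e) T.
Proof.
move=> aT ia; rewrite row_Phi ia.
have -> : xM i *m pm M (gM i) a *m f a = xM i *m f (gM i) *m pm N (shift (gM i) e) (shift a e).
  by rewrite -mulmxA -nf // mulmxA.
by rewrite -[RHS]mulmxA (pmap_comp _ (vle_sh ia (lexx e)) aT).
Qed.

Lemma M_side t : 0 <= t <= 1 -> interleaved M (Pt t) (t * e).
Proof.
move=> ht; have /andP [t0 t1] := ht.
have te0 : 0 <= t * e by rewrite mulr_ge0.
have te1 : 0 <= (1 - t) * e by rewrite mulr_ge0 // subr_ge0.
case: (HM) => HcM HfM HkM; case: (HN) => HcN HfN HkN.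
have Ht := pres_t ht.
set P := Pt t.
have d0 : 0 <= t * e by rewrite mulr_ge0.
have smono : forall a b : pt, vle a b -> vle (shift a (t * e)) (shift b (t * e)).
  by move=> a b ab; exact: vle_sh ab (lexx (t * e)).
have GL : forall i, vle (Gt t (lshift pN i)) (shift (gM i) (t * e)) by move=> i; vsolve0.
pose yM i : 'rV[k]_(pdim P (shift (gM i) (t * e))) :=
  XPt t (lshift pN i) *m pm P (Gt t (lshift pN i)) (shift (gM i) (t * e)).
pose yP l : 'rV[k]_(pdim M (shift (Gt t l) (t * e))) :=
  match fintype.split l with
  | inl i => xM i *m pm M (gM i) (shift (Gt t l) (t * e))
  | inr j => xN j *m g (gN j) *m pm M (shift (gN j) e) (shift (Gt t l) (t * e)) end.
have yP_l : forall i, yP (lshift pN i) = xM i *m pm M (gM i) (shift (Gt t (lshift pN i)) (t * e)).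
  by move=> i; rewrite /yP split_lshift.
have yP_r : forall j, yP (rshift pM j) =
    xN j *m g (gN j) *m pm M (shift (gN j) e) (shift (Gt t (rshift pM j)) (t * e)).
  by move=> j; rewrite /yP split_rshift.
have uY : forall i (a : pt), vle (Gt t (lshift pN i)) a ->
    row i (usubmx (Ymx M (fun a => shift a (t * e)) (Gt t) yP a)) = xM i *m pm M (gM i) (shift a (t * e)).
  move=> i a ia; rewrite row_usub row_Ymx ia yP_l -mulmxA (pmap_comp _ _ (smono _ _ ia)) //.
  by vsolve0.
have dY : forall j (a : pt), vle (Gt t (rshift pM j)) a ->
    row j (dsubmx (Ymx M (fun a => shift a (t * e)) (Gt t) yP a)) =
    xN j *m g (gN j) *m pm M (shift (gN j) e) (shift a (t * e)).
  move=> j a ja; rewrite row_dsub row_Ymx ja yP_r -mulmxA (pmap_comp _ _ (smono _ _ ja)) //.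
  by vsolve0.
have RM : forall j, cM j *m Ymx P (fun a => shift a (t * e)) gM yM (rM j) = 0.
  move=> j.
  have h : vle (Rt t (lshift _ (lshift qN j))) (shift (rM j) (t * e)) by vsolve0.
  move: (rel_holds Ht h); rewrite Ct_1 row_mx_mul mul0mx addr0 => <-.
  apply: mul_supp => i /HcM gi; rewrite row_usub row_Ymx gi row_Phi.
  have gl : vle (Gt t (lshift pN i)) (shift (rM j) (t * e)) by vsolve gi.
  by rewrite gl /yM -mulmxA (pmap_comp _ (GL i) (smono _ _ gi)).
have RP : forall m, Ct m *m Ymx M (fun a => shift a (t * e)) (Gt t) yP (Rt t m) = 0.
  move=> m; case: (ordP m) => [[m' ->]|[m' ->]]; case: (ordP m') => [[j ->]|[j ->]].
  - rewrite Ct_1 row_mx_mul mul0mx addr0.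
    have rT : vle (rM j) (shift (Rt t (lshift _ (lshift qN j))) (t * e)) by vsolve0.
    rewrite -(rel_holds HM rT); apply: mul_supp => i /HcM gi.
    have gl : vle (Gt t (lshift pN i)) (Rt t (lshift _ (lshift qN j))) by vsolve gi.
    by rewrite uY // row_Phi (vle_trans gi rT).
  - rewrite Ct_2 row_mx_mul mul0mx add0r.
    have rT : vle (shift (rN j) e) (shift (Rt t (lshift _ (rshift qM j))) (t * e)) by vsolve0.
    have := rel_holds HN (vle_refl (rN j)) => E.
    have -> : cN j *m dsubmx (Ymx M (fun a => shift a (t * e)) (Gt t) yP (Rt t (lshift _ (rshift qM j))))
      = cN j *m (Phi N gN xN (rN j) *m g (rN j) *m pm M (shift (rN j) e)
                  (shift (Rt t (lshift _ (rshift qM j))) (t * e))).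
      apply: mul_supp => i /HcN gi.
      have gl : vle (Gt t (rshift pM i)) (Rt t (lshift _ (rshift qM j))) by vsolve gi.
      by rewrite dY // !row_mul (gN_push rT gi).
    by rewrite !mulmxA E !mul0mx.
  - rewrite Ct_3 row_mx_mul -rowE.
    have gl : vle (Gt t (lshift pN j)) (Rt t (rshift _ (lshift pN j))) by vsolve0.
    rewrite uY //.
    have rT : vle (shift (shift (gM j) e) e) (shift (Rt t (rshift _ (lshift pN j))) (t * e)) by vsolve0.
    have -> : - aa j *m dsubmx (Ymx M (fun a => shift a (t * e)) (Gt t) yP (Rt t (rshift _ (lshift pN j))))
      = - (aa j *m (Phi N gN xN (shift (gM j) e) *m g (shift (gM j) e) *m
           pm M (shift (shift (gM j) e) e) (shift (Rt t (rshift _ (lshift pN j))) (t * e)))).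
      rewrite mulNmx; congr (- _); apply: mul_supp => i /aa_supp gi.
      have gl' : vle (Gt t (rshift pM i)) (Rt t (rshift _ (lshift pN j))) by vsolve gi.
      by rewrite dY // !row_mul (gN_push rT gi).
    rewrite !mulmxA aa_Phi -(mulmxA (xM j)) gf -mulmxA.
    rewrite (pmap_comp _ _ rT) ?subrr //; vsolve0.
  - rewrite Ct_4 row_mx_mul -rowE.
    have gl : vle (Gt t (rshift pM j)) (Rt t (rshift _ (rshift pM j))) by vsolve0.
    rewrite dY //.
    have rT : vle (shift (gN j) e) (shift (Rt t (rshift _ (rshift pM j))) (t * e)) by vsolve0.
    have -> : - bb j *m usubmx (Ymx M (fun a => shift a (t * e)) (Gt t) yP (Rt t (rshift _ (rshift pM j))))
      = - (bb j *m Phi M gM xM (shift (gN j) e) *m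
           pm M (shift (gN j) e) (shift (Rt t (rshift _ (rshift pM j))) (t * e))).
      rewrite mulNmx -mulmxA; congr (- _); apply: mul_supp => i /bb_supp gi.
      have gl' : vle (Gt t (lshift pN i)) (Rt t (rshift _ (rshift pM j))) by vsolve gi.
      by rewrite uY // row_mul row_Phi gi -mulmxA (pmap_comp _ gi rT).
    by rewrite bb_Phi addrC subrr.
apply: (interleave_pres (yM := yM) (yN := yP) d0 HM Ht RM RP).
- move=> i; rewrite /yM (gen_push _ (GL i)) (vPhi_mor Ht smono RP).
  rewrite -rowE row_Ymx (GL i) yP_l -mulmxA (pmap_comp _ _ (smono _ _ (GL i))) //.
  by vsolve0.
- move=> l; case: (ordP l) => [[i ->]|[j ->]].
  + rewrite yP_l.
    have iT : vle (gM i) (shift (Gt t (lshift pN i)) (t * e)) by vsolve0.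
    rewrite (gen_push _ iT) (vPhi_mor HM smono RM) -rowE row_Ymx iT /yM -mulmxA.
    by rewrite (pmap_comp _ (GL i) (smono _ _ iT)).
  + rewrite yP_r.
    set T := shift (shift (Gt t (rshift pM j)) (t * e)) (t * e).
    have jT : vle (shift (gN j) e) (shift (Gt t (rshift pM j)) (t * e)) by vsolve0.
    rewrite -bb_Phi (Phi_push _ (bb_supp (j:=j)) jT) (vPhi_mor HM smono RM).
    have rT : vle (Rt t (rshift _ (rshift pM j))) T by rewrite /T; vsolve0.
    have := rel_holds Ht rT; rewrite Ct_4 row_mx_mul mulNmx -rowE => /eqP.
    rewrite addrC subr_eq0 => /eqP E.
    have lTT : vle (Gt t (rshift pM j)) T by rewrite /T; vsolve0.
    rewrite (gen_push _ lTT) -rowE -row_dsub E.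
    apply: mul_supp => i /bb_supp gi.
    have iT : vle (gM i) (shift (Gt t (rshift pM j)) (t * e)) by vsolve gi.
    rewrite row_Ymx iT row_usub row_Phi.
    have lT : vle (Gt t (lshift pN i)) T by rewrite /T; vsolve gi.
    by rewrite lT /yM -mulmxA (pmap_comp _ (GL i) (smono _ _ iT)).
Qed.


Lemma N_side t : 0 <= t <= 1 -> interleaved N (Pt t) ((1 - t) * e).
Proof.
move=> ht; have /andP [t0 t1] := ht.
have te0 : 0 <= t * e by rewrite mulr_ge0.
have te1 : 0 <= (1 - t) * e by rewrite mulr_ge0 // subr_ge0.
case: (HM) => HcM HfM HkM; case: (HN) => HcN HfN HkN.
have Ht := pres_t ht.
set P := Pt t.
have smono : forall a b : pt, vle a b -> vle (shift a ((1 - t) * e)) (shift b ((1 - t) * e)).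
  by move=> a b ab; exact: vle_sh ab (lexx _).
have GR : forall j, vle (Gt t (rshift pM j)) (shift (gN j) ((1 - t) * e)) by move=> j; vsolve0.
pose yN j : 'rV[k]_(pdim P (shift (gN j) ((1 - t) * e))) :=
  XPt t (rshift pM j) *m pm P (Gt t (rshift pM j)) (shift (gN j) ((1 - t) * e)).
pose yP l : 'rV[k]_(pdim N (shift (Gt t l) ((1 - t) * e))) :=
  match fintype.split l with
  | inl i => xM i *m f (gM i) *m pm N (shift (gM i) e) (shift (Gt t l) ((1 - t) * e))
  | inr j => xN j *m pm N (gN j) (shift (Gt t l) ((1 - t) * e)) end.
have yP_l : forall i, yP (lshift pN i) =
    xM i *m f (gM i) *m pm N (shift (gM i) e) (shift (Gt t (lshift pN i)) ((1 - t) * e)).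
  by move=> i; rewrite /yP split_lshift.
have yP_r : forall j, yP (rshift pM j) = xN j *m pm N (gN j) (shift (Gt t (rshift pM j)) ((1 - t) * e)).
  by move=> j; rewrite /yP split_rshift.
have uY : forall i (a : pt), vle (Gt t (lshift pN i)) a ->
    row i (usubmx (Ymx N (fun a => shift a ((1 - t) * e)) (Gt t) yP a)) =
    xM i *m f (gM i) *m pm N (shift (gM i) e) (shift a ((1 - t) * e)).
  move=> i a ia; rewrite row_usub row_Ymx ia yP_l -mulmxA (pmap_comp _ _ (smono _ _ ia)) //.
  by vsolve0.
have dY : forall j (a : pt), vle (Gt t (rshift pM j)) a ->
    row j (dsubmx (Ymx N (fun a => shift a ((1 - t) * e)) (Gt t) yP a)) =
    xN j *m pm N (gN j) (shift a ((1 - t) * e)).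
  move=> j a ja; rewrite row_dsub row_Ymx ja yP_r -mulmxA (pmap_comp _ _ (smono _ _ ja)) //.
  by vsolve0.
have RN : forall j, cN j *m Ymx P (fun a => shift a ((1 - t) * e)) gN yN (rN j) = 0.
  move=> j.
  have h : vle (Rt t (lshift _ (rshift qM j))) (shift (rN j) ((1 - t) * e)) by vsolve0.
  move: (rel_holds Ht h); rewrite Ct_2 row_mx_mul mul0mx add0r => <-.
  apply: mul_supp => i /HcN gi; rewrite row_dsub row_Ymx gi row_Phi.
  have gl : vle (Gt t (rshift pM i)) (shift (rN j) ((1 - t) * e)) by vsolve gi.
  by rewrite gl /yN -mulmxA (pmap_comp _ (GR i) (smono _ _ gi)).
have RP : forall m, Ct m *m Ymx N (fun a => shift a ((1 - t) * e)) (Gt t) yP (Rt t m) = 0.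
  move=> m; case: (ordP m) => [[m' ->]|[m' ->]]; case: (ordP m') => [[j ->]|[j ->]].
  - rewrite Ct_1 row_mx_mul mul0mx addr0.
    have rT : vle (shift (rM j) e) (shift (Rt t (lshift _ (lshift qN j))) ((1 - t) * e)) by vsolve0.
    have := rel_holds HM (vle_refl (rM j)) => E.
    have -> : cM j *m usubmx (Ymx N (fun a => shift a ((1 - t) * e)) (Gt t) yP (Rt t (lshift _ (lshift qN j))))
      = cM j *m (Phi M gM xM (rM j) *m f (rM j) *m pm N (shift (rM j) e)
                  (shift (Rt t (lshift _ (lshift qN j))) ((1 - t) * e))).
      apply: mul_supp => i /HcM gi.
      have gl : vle (Gt t (lshift pN i)) (Rt t (lshift _ (lshift qN j))) by vsolve gi.
      by rewrite uY // !row_mul (gM_push rT gi).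
    by rewrite !mulmxA E !mul0mx.
  - rewrite Ct_2 row_mx_mul mul0mx add0r.
    have rT : vle (rN j) (shift (Rt t (lshift _ (rshift qM j))) ((1 - t) * e)) by vsolve0.
    rewrite -(rel_holds HN rT); apply: mul_supp => i /HcN gi.
    have gl : vle (Gt t (rshift pM i)) (Rt t (lshift _ (rshift qM j))) by vsolve gi.
    by rewrite dY // row_Phi (vle_trans gi rT).
  - rewrite Ct_3 row_mx_mul -rowE.
    have gl : vle (Gt t (lshift pN j)) (Rt t (rshift _ (lshift pN j))) by vsolve0.
    rewrite uY //.
    have rT : vle (shift (gM j) e) (shift (Rt t (rshift _ (lshift pN j))) ((1 - t) * e)) by vsolve0.
    have -> : - aa j *m dsubmx (Ymx N (fun a => shift a ((1 - t) * e)) (Gt t) yP (Rt t (rshift _ (lshift pN j))))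
      = - (aa j *m Phi N gN xN (shift (gM j) e) *m
           pm N (shift (gM j) e) (shift (Rt t (rshift _ (lshift pN j))) ((1 - t) * e))).
      rewrite mulNmx -mulmxA; congr (- _); apply: mul_supp => i /aa_supp gi.
      have gl' : vle (Gt t (rshift pM i)) (Rt t (rshift _ (lshift pN j))) by vsolve gi.
      by rewrite dY // row_mul row_Phi gi -mulmxA (pmap_comp _ gi rT).
    by rewrite aa_Phi subrr.
  - rewrite Ct_4 row_mx_mul -rowE.
    have gl : vle (Gt t (rshift pM j)) (Rt t (rshift _ (rshift pM j))) by vsolve0.
    rewrite dY //.
    have rT : vle (shift (shift (gN j) e) e) (shift (Rt t (rshift _ (rshift pM j))) ((1 - t) * e)) by vsolve0.
    have -> : - bb j *m usubmx (Ymx N (fun a => shift a ((1 - t) * e)) (Gt t) yP (Rt t (rshift _ (rshift pM j))))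
      = - (bb j *m (Phi M gM xM (shift (gN j) e) *m f (shift (gN j) e) *m
           pm N (shift (shift (gN j) e) e) (shift (Rt t (rshift _ (rshift pM j))) ((1 - t) * e)))).
      rewrite mulNmx; congr (- _); apply: mul_supp => i /bb_supp gi.
      have gl' : vle (Gt t (lshift pN i)) (Rt t (rshift _ (rshift pM j))) by vsolve gi.
      by rewrite uY // !row_mul (gM_push rT gi).
    rewrite !mulmxA bb_Phi -(mulmxA (xN j)) fg -mulmxA.
    rewrite (pmap_comp _ _ rT) ?addNr //; vsolve0.
apply: (interleave_pres (yM := yN) (yN := yP) te1 HN Ht RN RP).
- move=> j; rewrite /yN (gen_push _ (GR j)) (vPhi_mor Ht smono RP).
  rewrite -rowE row_Ymx (GR j) yP_r -mulmxA (pmap_comp _ _ (smono _ _ (GR j))) //.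
  by vsolve0.
- move=> l; case: (ordP l) => [[i ->]|[j ->]].
  + rewrite yP_l.
    set T := shift (shift (Gt t (lshift pN i)) ((1 - t) * e)) ((1 - t) * e).
    have iT : vle (shift (gM i) e) (shift (Gt t (lshift pN i)) ((1 - t) * e)) by vsolve0.
    rewrite -aa_Phi (Phi_push _ (aa_supp (i:=i)) iT) (vPhi_mor HN smono RN).
    have rT : vle (Rt t (rshift _ (lshift pN i))) T by rewrite /T; vsolve0.
    have := rel_holds Ht rT; rewrite Ct_3 row_mx_mul mulNmx -rowE => /eqP.
    rewrite subr_eq0 => /eqP E.
    have lTT : vle (Gt t (lshift pN i)) T by rewrite /T; vsolve0.
    rewrite (gen_push _ lTT) -rowE -row_usub E.
    apply: mul_supp => j /aa_supp gj.
    have jT : vle (gN j) (shift (Gt t (lshift pN i)) ((1 - t) * e)) by vsolve gj.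
    rewrite row_Ymx jT row_dsub row_Phi.
    have rT' : vle (Gt t (rshift pM j)) T by rewrite /T; vsolve gj.
    by rewrite rT' /yN -mulmxA (pmap_comp _ (GR j) (smono _ _ jT)).
  + rewrite yP_r.
    have jT : vle (gN j) (shift (Gt t (rshift pM j)) ((1 - t) * e)) by vsolve0.
    rewrite (gen_push _ jT) (vPhi_mor HN smono RN) -rowE row_Ymx jT /yN -mulmxA.
    by rewrite (pmap_comp _ (GR j) (smono _ _ jT)).
Qed.


Definition gam (tau : R) : pmod := if tau <= 0 then M else if 1 <= tau then N else Pt tau.

Lemma MN_int : interleaved M N e.
Proof. by split => //; exists f, g; split. Qed.

Lemma self_int (Q : pmod) p q (gQ : 'I_p -> pt) xQ (rQ : 'I_q -> pt) cQ :
  pres Q gQ xQ rQ cQ -> interleaved Q Q 0.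
Proof.
move=> HQ; have h : forall a : pt, vle a (shift a 0).
  by move=> a; apply/vleP => i; rewrite /shift addr0.
by apply: (close_interleaved (lexx 0) HQ HQ) => *; exact: h.
Qed.

Lemma gam_cases u : 0 <= u <= 1 ->
  [\/ u = 0 /\ gam u = M, u = 1 /\ gam u = N | gam u = Pt u].
Proof.
case/andP => u0 u1; rewrite /gam.
case: ifPn => h0; first by constructor 1; split => //; apply/le_anti; rewrite h0 u0.
case: ifPn => h1; first by constructor 2; split => //; apply/le_anti; rewrite h1 u1.
by constructor 3.
Qed.

Lemma gam_lip s t : 0 <= s <= 1 -> 0 <= t <= 1 ->
  interleaved (gam s) (gam t) (`|s - t| * e).
Proof.
move=> hs ht; have /andP [s0 s1] := hs; have /andP [t0 t1] := ht.
case: (gam_cases hs) => [[-> ->]|[-> ->]|->];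
case: (gam_cases ht) => [[-> ->]|[-> ->]|->].
- by rewrite subrr normr0 mul0r; exact: self_int HM.
- by rewrite sub0r normrN normr1 mul1r; exact: MN_int.
- by rewrite sub0r normrN ger0_norm //; exact: M_side.
- by rewrite subr0 normr1 mul1r; apply: interleaved_sym; exact: MN_int.
- by rewrite subrr normr0 mul0r; exact: self_int HN.
- by rewrite ger0_norm ?subr_ge0 //; exact: N_side.
- by rewrite subr0 ger0_norm //; apply: interleaved_sym; exact: M_side.
- by rewrite distrC ger0_norm ?subr_ge0 //; apply: interleaved_sym; exact: N_side.
- exact: close_t.
Qed.

Lemma gam_dI s t : 0 <= s <= 1 -> 0 <= t <= 1 ->
  (dI (gam s) (gam t) <= (`|s - t| * e)%:E)%E.
Proof. by move=> hs ht; apply: dI_le; exact: gam_lip. Qed.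

Lemma gam_fin t : 0 <= t <= 1 -> fin_pres (gam t).
Proof.
move=> ht; rewrite /gam; case: ifPn => _.
  by apply/fin_presP; do 6 eexists; exact: HM.
case: ifPn => _; first by apply/fin_presP; do 6 eexists; exact: HN.
exact: fin_pres_t.
Qed.

Lemma gam_path : path_in (@fin_pres k R n) gam.
Proof.
split; first exact: gam_fin.
move=> t ht eps eps0; exists (eps / (e + 1)).
  by rewrite divr_gt0 // ltr_wpDl.
move=> s hs st; apply: le_lt_trans (gam_dI hs ht) _; rewrite lte_fin.
have e1 : 0 < e + 1 by rewrite ltr_wpDl.
apply: le_lt_trans (_ : `|s - t| * (e + 1) < eps).
  by rewrite ler_wpM2l // lerDl.
by rewrite -ltr_pdivlMr.
Qed.

Lemma gam_len : (plength gam <= e%:E)%E.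
Proof.
apply/ereal_supP => _ [m [t [t0 tm tmono ->]]].
have lo : forall i, (i <= m)%N -> 0 <= t i.
  elim=> [|i IH] im; first by rewrite t0.
  by apply: le_trans (IH (ltnW im)) (tmono _ im).
have hi : forall d, (d <= m)%N -> t (m - d)%N <= t m.
  elim=> [|d IH] dm; first by rewrite subn0.
  apply: le_trans (IH (ltnW dm)); rewrite -(subnSK dm); apply: tmono.
  by rewrite ltn_subrL /=; apply: leq_trans dm.
have hi' : forall i, (i <= m)%N -> t i <= 1.
  by move=> i im; rewrite -tm -{1}(subKn im); apply: hi; rewrite leq_subr.
have inI : forall i, (i <= m)%N -> 0 <= t i <= 1 by move=> i im; rewrite lo ?hi'.
suff : forall j, (j <= m)%N ->
   (\sum_(0 <= i < j) dI (gam (t i)) (gam (t i.+1)) <= ((t j - t 0) * e)%:E)%E.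
  by move/(_ m (leqnn m)); rewrite tm t0 subr0 mul1r.
elim=> [|j IH] jm; first by rewrite big_geq // t0 subrr mul0r.
rewrite big_nat_recr //= (_ : (t j.+1 - t 0) * e = (t j - t 0) * e + (t j.+1 - t j) * e);
  last by ring.
rewrite EFinD; apply: leeD; first exact: IH (ltnW jm).
apply: le_trans (gam_dI (inI _ (ltnW jm)) (inI _ jm)) _.
by rewrite lee_fin distrC ger0_norm // subr_ge0; apply: tmono.
Qed.

Lemma path_exists : exists gm, path_in (@fin_pres k R n) gm /\ gm 0 = M /\ gm 1 = N /\
  (plength gm <= e%:E)%E.
Proof.
exists gam; split; first exact: gam_path.
split; first by rewrite /gam lexx.
split; first by rewrite /gam ler10 lexx.
exact: gam_len.
Qed.

End Interp.

Unset Implicit Arguments.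

Theorem mainTheorem3 (k : fieldType) (R : realType) (n : nat) (M N : pmod k R n) :
  fin_pres M -> fin_pres N -> (dI M N < +oo)%E ->
  dI M N = ereal_inf [set plength gam | gam in
             [set gam : R -> pmod k R n |
                path_in (@fin_pres k R n) gam /\ gam 0 = M /\ gam 1 = N]].
Proof.
move=> /fin_presP [pM [qM [gM [xM [rM [cM HM]]]]]].
move=> /fin_presP [pN [qN [gN [xN [rN [cN HN]]]]]] _.
apply/eqP; rewrite eq_le; apply/andP; split.
- apply/ereal_infP => _ [gm [Hp [H0 H1]] <-].
  apply: ereal_sup_ubound; exists 1%N, (fun i => if i == 0%N then 0 else 1); split => //.
  + by move=> i; rewrite ltnS leqn0 => /eqP ->; rewrite ler01.
  + by rewrite big_nat1 /= H0 H1.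
- apply/ereal_infP => _ [e [e0 [f [g [nf ng gf fg]]]] <-].
  have [gm [Hp [H0 [H1 Hl]]]] := path_exists HM HN e0 nf ng gf fg.
  apply: le_trans Hl; apply: ereal_inf_lbound; exists gm => //.
Qed.
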